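(* Let $d,k$ be integers with $2\leq d\leq\frac{k+1}{2}$, $\Sigma_k=\{\sigma_1,\ldots,\sigma_k\}$, $\Sigma_d=\{\sigma_1,\ldots,\sigma_d\}$. Consider $r\geq2$ users over $\Sigma_k$, where user 1 has confusion graph $G_1=(\Sigma_k,\{ab\mid a\in\Sigma_k,\ b\in\Sigma_k\setminus\Sigma_d,\ a\neq b\})$ and users $2,\ldots,r$ have confusion graphs $G_2,\ldots,G_r$ each containing (as edge sets) the complement $\overline{G_1}=(\Sigma_k,\{ab\mid a,b\in\Sigma_d,\ a\neq b\})$. If $(\alpha\log_2 d,R_2,\ldots,R_r)$ with $\alpha\in[0,1]$ is a feasible rate vector, then $\sum_{i=2}^r R_i\leq(1-\alpha)\log_2(k-d+1)$.
   Context: Setting: a sender broadcasts a word of length $n$ over a finite alphabet $\Sigma$ to $r$ users; user $i$ has a confusion graph $G_i$ on vertex set $\Sigma$, where $ab$ is an edge iff user $i$ cannot distinguish letters $a$ and $b$. Two words $x,y\in\Sigma^n$ are distinguishable by user $i$ if there is a coordinate $t$ with $x_t\neq y_t$ and $x_ty_t$ not an edge of $G_i$. A vector $(m_1,\ldots,m_r)$ of positive integers is feasible for length $n$ if there is a map $E:[m_1]\times\cdots\times[m_r]\to\Sigma^n$ such that for every $i$ and all tuples $a,a'$ with $a_i\neq a'_i$, $E(a)$ and $E(a')$ are distinguishable by user $i$. A rate vector $(R_1,\ldots,R_r)$ is feasible if there is a sequence of feasible vectors for lengths $n\to\infty$ with $R_i=\lim_{n\to\infty}\frac{\log_2 m_i^{(n)}}{n}$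 for all $i$. *)

(* Defs.v *)
From Stdlib Require Import Reals.
From mathcomp Require Import all_boot.
Open Scope R_scope.

(* Alphabet Sigma_k = 'I_k (letter sigma_{j+1} is the ordinal j).
   A confusion graph is a boolean relation on 'I_k (ab edge iff G a b). *)

Definition log2 (x : R) : R := (ln x / ln 2).

Definition distinguishable {k n : nat} (G : rel 'I_k) (x y : 'I_n -> 'I_k) : Prop :=
  exists t : 'I_n, x t <> y t /\ ~~ G (x t) (y t).

Definition feasible_vec (k r n : nat) (G : 'I_r -> rel 'I_k) (m : 'I_r -> nat) : Prop :=
  (forall i, 0 < m i)%N /\
  exists E : ('I_r -> nat) -> ('I_n -> 'I_k),
    forall a a' : 'I_r -> nat,
      (forall i, a i < m i)%N -> (forall i, a' i < m i)%N ->
      forall i, a i <> a' i -> distinguishable (G i) (E a) (E a').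

Definition feasible_rate (k r : nat) (G : 'I_r -> rel 'I_k) (Rt : 'I_r -> R) : Prop :=
  exists (N : nat -> nat) (M : nat -> 'I_r -> nat),
    (forall B, exists J, forall j, (J <= j)%N -> (B <= N j)%N) /\
    (forall j, feasible_vec k r (N j) G (M j)) /\
    (forall i, Un_cv (fun j => (log2 (INR (M j i)) / INR (N j))) (Rt i)).

Definition G1 (k d : nat) : rel 'I_k :=
  fun a b => (a != b) && ((d <= a)%N || (d <= b)%N).

Definition G1c (k d : nat) : rel 'I_k :=
  fun a b => (a != b) && (a < d)%N && (b < d)%N.

(* Main.v *)
Require Import Defs.
From Stdlib Require Import Reals.
From mathcomp Require Import all_boot.
From mathcomp Require Import zify.
From Stdlib Require Import Lra.
From HB Require Import structures.
Open Scope R_scope.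

HB.instance Definition _ := Monoid.isComLaw.Build R 0 Rplus
  (fun a b c => esym (Rplus_assoc a b c)) Rplus_comm Rplus_0_l.

Lemma bigR_recr m (F : 'I_m.+1 -> R) :
  \big[Rplus/0]_(i < m.+1) F i = \big[Rplus/0]_(i < m) F (widen_ord (leqnSn m) i) + F ord_max.
Proof. by rewrite big_ord_recr. Qed.

Lemma bigR0 (F : 'I_0 -> R) : \big[Rplus/0]_(i < 0) F i = 0.
Proof. by rewrite big_ord0. Qed.

Definition pw (c x : R) : R := if Rle_dec x 0 then 0 else Rpower x c.

Lemma pw_pos c x : 0 < x -> pw c x = Rpower x c.
Proof. intro H; unfold pw; destruct (Rle_dec x 0); [lra|reflexivity]. Qed.

Lemma pw_0 c : pw c 0 = 0.
Proof. unfold pw; destruct (Rle_dec 0 0); [reflexivity|lra]. Qed.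

Lemma Rpower_pos x c : 0 < Rpower x c.
Proof. unfold Rpower; apply exp_pos. Qed.

Lemma pw_ge0 c x : 0 <= pw c x.
Proof. unfold pw; destruct (Rle_dec x 0); simpl; [lra|left; apply Rpower_pos]. Qed.

Lemma Rpower_one c : Rpower 1 c = 1.
Proof. unfold Rpower; rewrite ln_1 Rmult_0_r exp_0; reflexivity. Qed.

Lemma Rpower_le_id c t : 1 <= c -> 0 < t <= 1 -> Rpower t c <= t.
Proof.
intros Hc Ht.
replace c with (1 + (c - 1)) by ring.
rewrite Rpower_plus Rpower_1; [|lra].
assert (Rpower t (c - 1) <= 1).
{ pose proof (Rle_Rpower_l t 1 (c - 1) ltac:(lra) ltac:(lra)) as H; rewrite Rpower_one in H; exact H. }
nra.
Qed.

Lemma superadd c s b : 1 <= c -> 0 < s -> 0 < b ->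
  Rpower s c + Rpower b c <= Rpower (s + b) c.
Proof.
intros Hc Hs Hb.
assert (E : forall x, 0 < x -> x <= s + b -> Rpower x c <= x / (s + b) * Rpower (s + b) c).
{ intros x Hx Hxs.
  replace x with (x / (s + b) * (s + b)) at 1 by (field; lra).
  rewrite <- Rpower_mult_distr; [| apply Rdiv_lt_0_compat; lra | lra].
  apply Rmult_le_compat_r; [left; apply Rpower_pos|].
  apply Rpower_le_id; [lra|]. split; [apply Rdiv_lt_0_compat; lra|].
  apply (Rmult_le_reg_r (s+b)); [lra|]. unfold Rdiv. rewrite Rmult_assoc Rinv_l; lra. }
pose proof (E s Hs ltac:(lra)). pose proof (E b Hb ltac:(lra)).
assert (s / (s + b) * Rpower (s + b) c + b / (s + b) * Rpower (s + b) c = Rpower (s+b) c)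
  by (field; lra).
lra.
Qed.

Lemma h_mono c s a b : 1 <= c -> 0 <= s -> 0 < a <= b ->
  Rpower (s + a) c - Rpower a c <= Rpower (s + b) c - Rpower b c.
Proof.
intros Hc Hs Hab.
destruct (Req_dec s 0) as [->|Hs0].
{ rewrite !Rplus_0_l; lra. }
destruct (Req_dec a b) as [->|Hab0]; [lra|].
set (f := fun x => Rpower (s + x) c - Rpower x c).
set (f' := fun x => c * Rpower (s + x) (c - 1) * 1 - c * Rpower x (c - 1)).
destruct (MVT_cor2 f f' a b) as [xi [Hxi Ixi]]; [lra| |].
{ intros x Hx. unfold f, f'.
  apply derivable_pt_lim_minus.
  - apply (derivable_pt_lim_comp (fun x => s + x) (fun y => Rpower y c)).
    + replace 1 with (0 + 1) by ring. apply derivable_pt_lim_plus.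
      apply derivable_pt_lim_const. apply derivable_pt_lim_id.
    + apply derivable_pt_lim_power; lra.
  - apply derivable_pt_lim_power; lra. }
unfold f, f' in Hxi.
assert (Rpower xi (c - 1) <= Rpower (s + xi) (c - 1)) by (apply Rle_Rpower_l; lra).
assert (0 <= (c * Rpower (s + xi) (c - 1) * 1 - c * Rpower xi (c - 1)) * (b - a)).
{ apply Rmult_le_pos; [|lra]. nra. }
lra.
Qed.

Lemma H_pw c s a b : 1 <= c -> 0 <= s -> 0 <= a <= b ->
  pw c (s + a) - pw c a <= pw c (s + b) - pw c b.
Proof.
intros Hc Hs Hab.
destruct (Req_dec s 0) as [->|Hs0]; [rewrite !Rplus_0_l; lra|].
destruct (Req_dec a 0) as [->|Ha0].
- rewrite Rplus_0_r pw_0 Rminus_0_r.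
  destruct (Req_dec b 0) as [->|Hb0]; [rewrite Rplus_0_r pw_0; lra|].
  rewrite !pw_pos; try lra.
  pose proof (superadd c s b Hc ltac:(lra) ltac:(lra)); lra.
- rewrite !pw_pos; try lra. apply h_mono; lra.
Qed.

Lemma sum_ge m (u : 'I_m -> R) mu : (forall v, mu <= u v) ->
  INR m * mu <= \big[Rplus/0]_(v < m) u v.
Proof.
revert u; induction m as [|m IH]; intros u Hu.
- rewrite bigR0; simpl; lra.
- rewrite S_INR bigR_recr.
  assert (INR m * mu <= \big[Rplus/0]_(v < m) u (widen_ord (leqnSn m) v)) by (apply IH; intros v; apply Hu).
  assert (mu <= u ord_max) by apply Hu. lra.
Qed.

Lemma A_ineq c m (u : 'I_m -> R) mu : 1 <= c -> 0 <= mu ->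
  (forall v, mu <= u v) ->
  pw c (mu * INR m) - INR m * pw c mu <=
  pw c (\big[Rplus/0]_(v < m) u v) - \big[Rplus/0]_(v < m) pw c (u v).
Proof.
intros Hc Hmu. revert u; induction m as [|m IH]; intros u Hu.
- rewrite !bigR0; simpl; rewrite Rmult_0_r pw_0; lra.
- rewrite S_INR !bigR_recr.
  assert (IH' := IH (fun v => u (widen_ord (leqnSn m) v)) (fun v => Hu _)).
  simpl in IH'.
  set S := \big[Rplus/0]_(v < m) u (widen_ord (leqnSn m) v) in IH' *.
  set Sp := \big[Rplus/0]_(v < m) pw c (u (widen_ord (leqnSn m) v)) in IH' *.
  assert (HS : INR m * mu <= S) by (apply sum_ge; intros v; apply Hu).
  assert (Hx : mu <= u ord_max) by apply Hu.
  assert (0 <= INR m) by apply pos_INR.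
  assert (0 <= INR m * mu) by (apply Rmult_le_pos; lra).
  pose proof (H_pw c S mu (u ord_max) Hc ltac:(lra) ltac:(lra)).
  pose proof (H_pw c mu (mu * INR m) S Hc Hmu ltac:(lra)).
  replace (mu * (INR m + 1)) with (mu + mu * INR m) by ring.
  replace (S + mu) with (mu + S) in * by ring.
  lra.
Qed.

Definition cc (d q : nat) : R := ln (INR (q + 1)) / ln (INR d).

Lemma ln_pos_nat d : (2 <= d)%N -> 0 < ln (INR d).
Proof.
move=> Hd. rewrite -ln_1. apply ln_increasing; [lra|].
replace 1 with (INR 1) by reflexivity. apply lt_INR. apply/ltP. exact Hd.
Qed.

Lemma cc_ge1 d q : (2 <= d)%N -> (d <= q + 1)%N -> 1 <= cc d q.
Proof.
move=> Hd Hq. have H := ln_pos_nat d Hd. unfold cc.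
apply (Rmult_le_reg_r (ln (INR d))); [lra|].
rewrite Rmult_1_l. unfold Rdiv. rewrite Rmult_assoc Rinv_l; [|lra]. rewrite Rmult_1_r.
have H0 : 0 < INR d by (replace 0 with (INR 0) by reflexivity; apply lt_INR; apply/ltP; by apply: leq_trans Hd).
have H1 : INR d <= INR (q + 1) by (apply le_INR; apply/leP; exact Hq).
destruct (Req_dec (INR d) (INR (q+1))) as [->|Hne]; [lra|].
left; apply ln_increasing; lra.
Qed.

Lemma Rpower_cc d q : (2 <= d)%N -> Rpower (INR d) (cc d q) = INR (q + 1).
Proof.
move=> Hd. have H := ln_pos_nat d Hd. unfold Rpower, cc.
replace (ln (INR (q + 1)) / ln (INR d) * ln (INR d)) with (ln (INR (q+1))) by (field; lra).
apply exp_ln. replace 0 with (INR 0) by reflexivity. apply lt_INR. apply/ltP. by rewrite addn1.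
Qed.

Lemma pw_sum d q (u : 'I_d -> R) mu : (2 <= d)%N -> (d <= q + 1)%N -> 0 <= mu ->
  (forall v, mu <= u v) ->
  \big[Rplus/0]_(v < d) pw (cc d q) (u v) + (INR (q + 1) - INR d) * pw (cc d q) mu <=
  pw (cc d q) (\big[Rplus/0]_(v < d) u v).
Proof.
move=> Hd Hq Hmu Hu.
have Hc := cc_ge1 d q Hd Hq.
have HA := A_ineq (cc d q) d u mu Hc Hmu Hu.
have E : pw (cc d q) (mu * INR d) = INR (q + 1) * pw (cc d q) mu.
{ destruct (Req_dec mu 0) as [->|Hm].
  - rewrite Rmult_0_l pw_0; ring.
  - have Hd0 : 0 < INR d by (replace 0 with (INR 0) by reflexivity; apply lt_INR; apply/ltP; by apply: leq_trans Hd).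
    rewrite !pw_pos; [| lra | apply Rmult_lt_0_compat; lra].
    rewrite -Rpower_mult_distr; [|lra|lra]. rewrite Rpower_cc //. ring. }
lra.
Qed.

Open Scope nat_scope.

Definition prem (d q n : nat) (y : n.-tuple (option 'I_q)) (f z : n.-tuple 'I_d) : bool :=
  [forall t, (tnth y t == None) ==> (tnth z t == tnth f t)].

Definition PS (d q n : nat) (U : {set n.-tuple 'I_d}) : {set n.-tuple (option 'I_q)} :=
  [set y | [exists f : n.-tuple 'I_d, [forall z : n.-tuple 'I_d, prem d q n y f z ==> (z \in U)]]].

Lemma PS_mono d q n (U V : {set n.-tuple 'I_d}) : U \subset V -> PS d q n U \subset PS d q n V.
Proof.
move=> /subsetP UV; apply/subsetP => y; rewrite !inE => /existsP [f /forallP Hf].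
apply/existsP; exists f; apply/forallP => z; apply/implyP => Hz.
by apply: UV; move/implyP: (Hf z); apply.
Qed.


Lemma PS_witness d q n (U : {set n.-tuple 'I_d}) y : y \in PS d q n U -> exists z, z \in U.
Proof.
rewrite inE => /existsP [f /forallP Hf]; exists f.
move/implyP: (Hf f); apply; apply/forallP => t; apply/implyP => _; by [].
Qed.

Lemma prem_cons d q n y0 (y : n.-tuple (option 'I_q)) (f0 z0 : 'I_d) (f z : n.-tuple 'I_d) :
  prem d q n.+1 [tuple of y0 :: y] [tuple of f0 :: f] [tuple of z0 :: z] =
  ((y0 == None) ==> (z0 == f0)) && prem d q n y f z.
Proof.
apply/idP/idP.
- move=> /forallP H; apply/andP; split.
  + by move: (H ord0); rewrite !tnth0.
  + apply/forallP => t; by move: (H (lift ord0 t)); rewrite !tnthS.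
- move=> /andP [H0 /forallP H]; apply/forallP => t.
  case: (unliftP ord0 t) => [j ->|->]; first by rewrite !tnthS.
  by rewrite !tnth0.
Qed.

Definition Uv d n (U : {set n.+1.-tuple 'I_d}) (v : 'I_d) : {set n.-tuple 'I_d} :=
  [set z : n.-tuple 'I_d | [tuple of v :: z] \in U].

Lemma card_Uv d n (U : {set n.+1.-tuple 'I_d}) : #|U| = \sum_(v < d) #|Uv d n U v|.
Proof.
rewrite -sum1_card (partition_big (fun z : n.+1.-tuple 'I_d => thead z) predT) //=.
apply: eq_bigr => v _.
have -> : #|Uv d n U v| = #|[set [tuple of v :: z] | z : n.-tuple 'I_d in Uv d n U v]|.
  rewrite card_imset // => z1 z2 E; apply: val_inj.
  by move: (congr1 (fun t : n.+1.-tuple 'I_d => behead (val t)) E).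
rewrite -sum1_card; apply: eq_bigl => z.
case/tupleP: z => z0 z; rewrite theadE.
apply/idP/imsetP.
- move=> /andP [Hz /eqP E]; subst z0; exists z; [by rewrite inE | by []].
- move=> [w]; rewrite inE => Hw E.
  have [-> ->] : z0 = v /\ z = w.
    split; first by move: (congr1 (fun t => thead t) E); rewrite !theadE.
    apply: val_inj; by move: (congr1 (fun t => val (behead_tuple t)) E).
  by rewrite Hw eqxx.
Qed.

Lemma card_bigcup_le (T I : finType) (A : I -> {set T}) :
  #|\bigcup_i A i| <= \sum_i #|A i|.
Proof.
apply: (big_ind2 (fun (x : {set T}) y => #|x| <= y)).
- by rewrite cards0.
- move=> x1 x2 y1 y2 H1 H2; apply: leq_trans (leq_card_setU _ _).1 _; exact: leq_add.
- by [].
Qed.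

Lemma card_bigcup_common (T : finType) d (A : 'I_d -> {set T}) (B : {set T}) :
  (0 < d)%N -> (forall i, B \subset A i) ->
  #|\bigcup_i A i| + d.-1 * #|B| <= \sum_i #|A i|.
Proof.
move=> d0 HB.
have E : \sum_i #|A i| = \sum_i #|A i :\: B| + d * #|B|.
  rewrite -[d in d * _]card_ord -sum_nat_const -big_split /=.
  apply: eq_bigr => i _; rewrite -(cardsID B (A i)) addnC.
  by rewrite (setIidPr (HB i)).
have L : #|\bigcup_i A i| <= #|B| + \sum_i #|A i :\: B|.
  have S : \bigcup_i A i \subset B :|: \bigcup_i (A i :\: B).
    apply/subsetP => x /bigcupP [i _ Hx].
    case: (boolP (x \in B)) => xB; first by rewrite inE xB.
    rewrite inE; apply/orP; right; apply/bigcupP; exists i => //.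
    by rewrite inE xB Hx.
  apply: leq_trans (subset_leq_card S) _.
  apply: leq_trans (leq_card_setU _ _).1 _.
  by rewrite leq_add2l card_bigcup_le.
rewrite E; case: d d0 A HB E L => // d _ A HB E L /=.
rewrite mulSn addnA leq_add2r addnC; exact: L.
Qed.

Lemma PS_step d q n (U : {set n.+1.-tuple 'I_d}) : (0 < d)%N ->
  #|PS d q n.+1 U| + d.-1 * #|PS d q n (\bigcap_v Uv d n U v)| <=
  \sum_v #|PS d q n (Uv d n U v)| + q * #|PS d q n (\bigcap_v Uv d n U v)|.
Proof.
move=> d0.
set I := \bigcap_v Uv d n U v.
set N := [set y : n.+1.-tuple (option 'I_q) | thead y == None].
have S1 : PS d q n.+1 U :&: N \subset
    [set [tuple of None :: y'] | y' : n.-tuple (option 'I_q) in \bigcup_v PS d q n (Uv d n U v)].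
  apply/subsetP => y; case/tupleP: y => y0 y; rewrite !inE theadE.
  case/andP => /existsP [f]; case/tupleP: f => f0 f /forallP Hf /eqP Ey0; subst y0.
  apply/imsetP; exists y => //.
  apply/bigcupP; exists f0 => //; rewrite inE; apply/existsP; exists f.
  apply/forallP => z; apply/implyP => Hz; rewrite inE.
  by move/implyP: (Hf [tuple of f0 :: z]); apply; rewrite prem_cons Hz /= eqxx.
have S2 : PS d q n.+1 U :\: N \subset
    [set [tuple of Some p.1 :: p.2] | p : 'I_q * n.-tuple (option 'I_q) in setX [set: 'I_q] (PS d q n I)].
  apply/subsetP => y; case/tupleP: y => y0 y; rewrite !inE theadE.
  case/andP => Hy0 /existsP [f]; case/tupleP: f => f0 f /forallP Hf.
  case: y0 Hy0 Hf => [c|] // _ Hf.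
  apply/imsetP; exists (c, y) => //; rewrite !inE /=.
  apply/existsP; exists f; apply/forallP => z; apply/implyP => Hz.
  apply/bigcapP => v _; rewrite inE.
  by move/implyP: (Hf [tuple of v :: z]); apply; rewrite prem_cons Hz.
have E := cardsID N (PS d q n.+1 U).
have L1 := leq_trans (subset_leq_card S1) (leq_imset_card _ _).
have L2 := leq_trans (subset_leq_card S2) (leq_imset_card _ _).
rewrite cardsX cardsT card_ord in L2.
have L3 := @card_bigcup_common _ d (fun v => PS d q n (Uv d n U v)) (PS d q n I) d0.
have L3' := L3 (fun v => PS_mono d q n _ _ (bigcap_inf v isT)).
rewrite -E -addnA [X in _ + X]addnC addnA.
apply: leq_add; last exact: L2.
apply: leq_trans L3'; by rewrite leq_add2r.
Qed.

Open Scope R_scope.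

Lemma INR_sum m (F : 'I_m -> nat) : INR (\sum_(i < m) F i) = \big[Rplus/0]_(i < m) INR (F i).
Proof.
elim: m F => [|m IH] F; first by rewrite big_ord0 bigR0.
by rewrite big_ord_recr bigR_recr plus_INR IH.
Qed.

Lemma bigR_le m (F G : 'I_m -> R) : (forall i, F i <= G i) ->
  \big[Rplus/0]_(i < m) F i <= \big[Rplus/0]_(i < m) G i.
Proof.
elim: m F G => [|m IH] F G H; first by rewrite !bigR0; lra.
rewrite !bigR_recr. apply Rplus_le_compat; [apply IH => i; apply H | apply H].
Qed.

Lemma INR_le a b : (a <= b)%N -> INR a <= INR b.
Proof. move=> H; apply le_INR; apply/leP; exact H. Qed.

Lemma main_ineq d q n (U : {set n.-tuple 'I_d}) : (2 <= d)%N -> (d <= q + 1)%N ->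
  INR #|PS d q n U| <= pw (cc d q) (INR #|U|).
Proof.
move=> Hd Hq; have Hc := cc_ge1 d q Hd Hq.
elim: n U => [|n IH] U.
- have H1 : (#|PS d q 0 U| <= 1)%N.
    apply: leq_trans (max_card _) _; by rewrite card_tuple expn0.
  case: (posnP #|PS d q 0 U|) => [->|Hp]; first by (simpl; apply pw_ge0).
  have [y Hy] : exists y, y \in PS d q 0 U by apply/card_gt0P.
  have [z Hz] := PS_witness d q 0 U y Hy.
  have HU : #|U| = 1%N.
    apply/eqP; rewrite eqn_leq; apply/andP; split.
    + apply: leq_trans (max_card _) _; by rewrite card_tuple expn0.
    + by apply/card_gt0P; exists z.
  have -> : #|PS d q 0 U| = 1%N by apply/eqP; rewrite eqn_leq H1 Hp.
  rewrite HU pw_pos /=; [rewrite Rpower_one; lra | lra].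
- have d0 : (0 < d)%N by apply: leq_trans Hd.
  have HS := INR_le _ _ (PS_step d q n U d0).
  set I := \bigcap_v Uv d n U v in HS *.
  rewrite !plus_INR !mult_INR INR_sum in HS.
  have Ed : INR d.-1 = INR d - 1 by rewrite -{2}(prednK d0) S_INR; ring.
  rewrite Ed in HS.
  have Eq : INR (q + 1) = INR q + 1 by rewrite plus_INR.
  have Hcoef : 0 <= INR (q + 1) - INR d by (have := INR_le _ _ Hq; lra).
  have HI := IH I.
  have HUv : \big[Rplus/0]_(i < d) INR #|PS d q n (Uv d n U i)| <=
             \big[Rplus/0]_(i < d) pw (cc d q) (INR #|Uv d n U i|) by apply bigR_le => i; apply IH.
  have Hmu : forall v, INR #|I| <= INR #|Uv d n U v|.
    by move=> v; apply INR_le; apply subset_leq_card; apply: bigcap_inf.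
  have HP := pw_sum d q (fun v => INR #|Uv d n U v|) (INR #|I|) Hd Hq (pos_INR _) Hmu.
  rewrite (card_Uv d n U) INR_sum.
  have := Rmult_le_compat_l _ _ _ Hcoef HI.
  have := pw_ge0 (cc d q) (INR #|I|).
  nra.
Qed.

Lemma card_lt Mx m : (m <= Mx)%N -> #|[set x : 'I_Mx | (val x < m)%N]| = m.
Proof.
move=> H.
have -> : [set x : 'I_Mx | (val x < m)%N] = [set widen_ord H y | y in 'I_m].
  apply/setP => x; rewrite inE; apply/idP/imsetP.
  - move=> Hx; exists (Ordinal Hx) => //; by apply: val_inj.
  - by move=> [y _ ->] /=.
rewrite card_imset ?card_ord //.
move=> y1 y2 E; apply: val_inj; exact: (congr1 val E).
Qed.

Lemma sum_disjoint (T : finType) m (F : 'I_m -> {set T}) :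
  (forall i j, i != j -> forall z, z \in F i -> z \in F j -> False) ->
  (\sum_(i < m) #|F i| <= #|T|)%N.
Proof.
move=> Hd.
suff S : \sum_(i < m) #|F i| = #|\bigcup_(i < m) F i| by rewrite S max_card.
elim: m F Hd => [|m IH] F Hd; first by rewrite big_ord0 big_ord0 cards0.
rewrite big_ord_recr (big_ord_recr m (fun i => F i)) /=.
rewrite IH; last by move=> i j Hij; apply: Hd; apply: contra Hij => /eqP E; apply/eqP; apply: val_inj; exact: (congr1 val E).
rewrite cardsU.
suff -> : (\bigcup_(i < m) F (widen_ord (leqnSn m) i)) :&: F ord_max = set0 by rewrite cards0 subn0.
apply/setP => z; rewrite !inE; apply/negP => /andP [/bigcupP [i _ Hi] Hm].
apply: (Hd _ _ _ z Hi Hm).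
by rewrite -(inj_eq val_inj) /= neq_ltn ltn_ord.
Qed.

Lemma Rln_le x y : 0 < x -> x <= y -> ln x <= ln y.
Proof.
move=> Hx Hxy; destruct (Req_dec x y) as [->|Hne]; [lra|].
left; apply ln_increasing; lra.
Qed.

Lemma INR_expn a b : INR (a ^ b)%N = INR a ^ b.
Proof. elim: b => [|b IH]; first by rewrite expn0. by rewrite expnS mult_INR IH. Qed.

Lemma INR_pos a : (0 < a)%N -> 0 < INR a.
Proof. move=> H; replace 0 with (INR 0) by reflexivity; apply lt_INR; apply/ltP; exact H. Qed.

Definition pt (d k : nat) (x : 'I_k) : option 'I_(k - d) :=
  if (d <= x)%N then insub (x - d)%N else None.

Lemma pt_None d k (x : 'I_k) : (pt d k x == None) = (x < d)%N.
Proof.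
rewrite /pt; case: leqP => H //.
case: insubP => // /negP []. by rewrite ltn_sub2r // (leq_ltn_trans H (ltn_ord x)).
Qed.

Lemma pt_inj d k (x y : 'I_k) : (d <= x)%N -> (d <= y)%N -> pt d k x = pt d k y -> x = y.
Proof.
move=> Hx Hy; rewrite /pt Hx Hy.
have Px : (x - d < k - d)%N by rewrite ltn_sub2r // (leq_ltn_trans Hx (ltn_ord x)).
have Py : (y - d < k - d)%N by rewrite ltn_sub2r // (leq_ltn_trans Hy (ltn_ord y)).
case: insubP => [u _ Eu|]; last by rewrite Px.
case: insubP => [v _ Ev|]; last by rewrite Py.
move=> [E]; subst v. apply: val_inj; by rewrite /= -(subnK Hx) -(subnK Hy) -Eu -Ev.
Qed.

Lemma per_n (d k r n : nat) (G : 'I_r -> rel 'I_k) (m : 'I_r -> nat) (i0 : 'I_r) :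
  (2 <= d)%N -> (d <= k - d + 1)%N -> val i0 = 0%N ->
  (forall i : 'I_r, val i = 0%N -> forall a b, G i a b = G1 k d a b) ->
  (forall i : 'I_r, val i <> 0%N -> forall a b, G1c k d a b -> G i a b) ->
  feasible_vec k r n G m ->
  ln (INR (m i0)) + ln (INR (\prod_(i | val i != 0%N) m i)) / cc d (k - d) <= INR n * ln (INR d).
Proof.
move=> Hd Hq Hi0 HG0 HGi [Hpos [E HE]].
have d0 : (0 < d)%N by apply: leq_trans Hd.
pose o : 'I_d := Ordinal d0.
pose Mx := (\sum_i m i)%N.
have HmMx : forall i, (m i <= Mx)%N by move=> i; rewrite /Mx (bigD1 i) //= leq_addr.
pose bnd (i : 'I_r) : nat := if val i == 0%N then 1%N else m i.
have Hbnd : forall i, (bnd i <= Mx)%N.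
  move=> i; rewrite /bnd; case: eqP => _ //; exact: leq_trans (Hpos i) (HmMx i).
pose A (i : 'I_r) : {set 'I_Mx} := [set x : 'I_Mx | (val x < bnd i)%N].
pose Fam := @setXn 'I_r (fun _ => 'I_Mx) A.
have cardFam : #|Fam| = (\prod_(i | val i != 0%N) m i)%N.
  rewrite cardsXn [RHS]big_mkcond /=; apply: eq_bigr => i _.
  rewrite card_lt // /bnd; by case: eqP.
pose msg (a : nat) (b : {dffun forall i : 'I_r, 'I_Mx}) : 'I_r -> nat :=
  fun i => if val i == 0%N then a else val (b i).
have Hmsg : forall a b, (a < m i0)%N -> b \in Fam -> forall i, (msg a b i < m i)%N.
  move=> a b Ha Hb i; move/setXnP: Hb => /(_ i); rewrite inE /bnd /msg.
  case: eqP => Hi // _.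
  by have -> : i = i0 by apply: val_inj; rewrite Hi Hi0.
pose w a b := E (msg a b).
pose inQ (wd : 'I_n -> 'I_k) (z : n.-tuple 'I_d) :=
  [forall t, (wd t < d)%N ==> (val (tnth z t) == val (wd t))].
pose U (a : 'I_(m i0)) : {set n.-tuple 'I_d} := [set z | [exists b in Fam, inQ (w (val a) b) z]].
pose pat (wd : 'I_n -> 'I_k) : n.-tuple (option 'I_(k - d)) := [tuple pt d k (wd t) | t < n].
have Claim1 : forall a, (#|Fam| <= #|PS d (k - d) n (U a)|)%N.
  move=> a.
  have sub : [set pat (w (val a) b) | b in Fam] \subset PS d (k - d) n (U a).
    apply/subsetP => y /imsetP [b Hb ->]; rewrite inE; apply/existsP.
    exists [tuple insubd o (val (w (val a) b t)) | t < n].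
    apply/forallP => z; apply/implyP => /forallP Hz.
    rewrite inE; apply/existsP; exists b; rewrite Hb /=; apply/forallP => t; apply/implyP => Ht.
    move/implyP: (Hz t); rewrite !tnth_mktuple pt_None => /(_ Ht) /eqP ->.
    by rewrite val_insubd Ht.
  have inj : {in Fam &, injective (fun b => pat (w (val a) b))}.
    move=> b b' Hb Hb' /= Eq; apply/ffunP => i; apply/eqP; apply/negP => Hne.
    case: (eqVneq (val i) 0%N) => Hi.
    - move/setXnP: Hb => /(_ i); move/setXnP: Hb' => /(_ i); rewrite !inE /bnd Hi /=.
      rewrite !ltnS !leqn0 => /eqP H1 /eqP H2; apply: Hne; apply/eqP; apply: val_inj => /=; by rewrite H1 H2.
    - have Hm : msg (val a) b i <> msg (val a) b' i.
        rewrite /msg (negbTE Hi) => Ev; apply: Hne; apply/eqP; exact: val_inj.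
      have [t [Ht Hnd]] := HE _ _ (Hmsg _ _ (ltn_ord a) Hb) (Hmsg _ _ (ltn_ord a) Hb') i Hm.
      have Hnd' : ~~ G1c k d (w (val a) b t) (w (val a) b' t).
        by apply: contra Hnd; apply: HGi; apply/eqP.
      have Et : pt d k (w (val a) b t) = pt d k (w (val a) b' t).
        by move: (congr1 (fun y => tnth y t) Eq); rewrite !tnth_mktuple.
      move: Hnd'; rewrite /G1c.
      case: (ltnP (w (val a) b t) d) => H1; case: (ltnP (w (val a) b' t) d) => H2.
      + by rewrite !andbT negbK => /eqP.
      + move=> _; move: (pt_None d k (w (val a) b' t)); rewrite -Et (pt_None d k (w (val a) b t)) H1 ltnNge H2; by [].
      + move=> _; move: (pt_None d k (w (val a) b t)); rewrite Et (pt_None d k (w (val a) b' t)) H2 ltnNge H1; by [].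
      + move=> _; apply: Ht; exact: (pt_inj d k _ _ H1 H2 Et).
  rewrite -(card_in_imset inj); exact: subset_leq_card sub.
have Claim2 : forall a a' : 'I_(m i0), a != a' -> forall z, z \in U a -> z \in U a' -> False.
  move=> a a' Haa z; rewrite !inE => /existsP [b /andP [Hb Hzb]] /existsP [b' /andP [Hb' Hzb']].
  have Hm : msg (val a) b i0 <> msg (val a') b' i0.
    rewrite /msg Hi0 /= => Ev; move/negP: Haa; apply; apply/eqP; exact: val_inj.
  have [t [Ht Hnd]] := HE _ _ (Hmsg _ _ (ltn_ord a) Hb) (Hmsg _ _ (ltn_ord a') Hb') i0 Hm.
  rewrite HG0 // /G1 in Hnd.
  have Hne : (w (val a) b t != w (val a') b' t) by apply/eqP.
  rewrite Hne /= negb_or -!ltnNge in Hnd; case/andP: Hnd => H1 H2.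
  move/forallP: Hzb => /(_ t); rewrite H1 /= => /eqP E1.
  move/forallP: Hzb' => /(_ t); rewrite H2 /= => /eqP E2.
  apply: Ht; apply: val_inj; exact: (etrans (esym E1) E2).
have Claim3 : (\sum_(a < m i0) #|U a| <= d ^ n)%N.
  have := sum_disjoint _ _ U Claim2; by rewrite card_tuple card_ord.
rewrite -cardFam.
have P0 : (0 < #|Fam|)%N by rewrite cardFam prodn_gt0.
have Hq' : (d <= k - d + 1)%N := Hq.
have Hc := cc_ge1 d (k - d) Hd Hq'.
set c := cc d (k - d) in Hc *.
set L := ln (INR #|Fam|) / c.
have Hx : forall a, exp L <= INR #|U a|.
  move=> a.
  have H1 := INR_le _ _ (Claim1 a).
  have H2 := main_ineq d (k - d) n (U a) Hd Hq'.
  case: (posnP #|U a|) => Hu.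
  - rewrite Hu /= pw_0 in H2. have HP := INR_pos _ P0. simpl in H2. exfalso; apply (Rlt_irrefl 0); eapply Rlt_le_trans; [exact HP| eapply Rle_trans; [exact H1|exact H2]].
  - have Hu' := INR_pos _ Hu.
    rewrite pw_pos // in H2.
    have H3 : ln (INR #|Fam|) <= c * ln (INR #|U a|).
      rewrite -ln_Rpower; apply Rln_le; [apply INR_pos; exact P0 | eapply Rle_trans; [exact H1 | exact H2]].
    rewrite -(exp_ln (INR #|U a|)) //.
    have H4 : L <= ln (INR #|U a|).
      rewrite /L; apply (Rmult_le_reg_r c); [lra|].
      unfold Rdiv; rewrite Rmult_assoc Rinv_l; lra.
    destruct (Req_dec L (ln (INR #|U a|))) as [->|Hne]; [lra|].
    left; apply exp_increasing; lra.
have HS := sum_ge (m i0) (fun a => INR #|U a|) (exp L) Hx.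
have HC := INR_le _ _ Claim3.
rewrite INR_sum INR_expn in HC.
have Hm0 := INR_pos _ (Hpos i0).
have HL : 0 < INR (m i0) * exp L by apply Rmult_lt_0_compat; [lra | apply exp_pos].
have := Rln_le _ _ HL (Rle_trans _ _ _ HS HC).
rewrite ln_mult //; [|apply exp_pos].
rewrite ln_exp ln_pow //; apply INR_pos; exact d0.
Qed.

Lemma cv_ext (u v : nat -> R) l : (forall j, u j = v j) -> Un_cv u l -> Un_cv v l.
Proof. move=> H Hu e He; have [N HN] := Hu e He; exists N => n Hn; rewrite -H; exact: HN. Qed.

Lemma cv_const a : Un_cv (fun _ => a) a.
Proof. move=> e He; exists 0%nat => n _; rewrite /R_dist Rminus_eq_0 Rabs_R0; exact He. Qed.

Lemma cv_big I (s : seq I) (P : pred I) (f : I -> nat -> R) (l : I -> R) :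
  (forall i, Un_cv (f i) (l i)) ->
  Un_cv (fun j => \big[Rplus/0]_(i <- s | P i) f i j) (\big[Rplus/0]_(i <- s | P i) l i).
Proof.
move=> Hf; elim: s => [|x s IH].
- rewrite big_nil; apply: (cv_ext (fun _ => 0)); [by move=> j; rewrite big_nil | exact: cv_const].
- rewrite big_cons; case Px: (P x).
  + apply: (cv_ext (fun j => f x j + \big[Rplus/0]_(i <- s | P i) f i j)).
      by move=> j; rewrite big_cons Px.
    exact: CV_plus.
  + apply: (cv_ext (fun j => \big[Rplus/0]_(i <- s | P i) f i j)).
      by move=> j; rewrite big_cons Px.
    exact: IH.
Qed.

Lemma cv_scale u l a : Un_cv u l -> Un_cv (fun j => u j / a) (l / a).
Proof.
move=> H; unfold Rdiv; apply: (CV_mult u (fun _ => / a)); [exact H | exact: cv_const].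
Qed.

Lemma cv_le1 u l J : Un_cv u l -> (forall j, (J <= j)%N -> u j <= 1) -> l <= 1.
Proof.
move=> Hu HJ; destruct (Rle_dec l 1) as [H|H]; [exact H|].
have [N HN] := Hu (l - 1) ltac:(lra).
have := HN (maxn N J) (leP (leq_maxl N J)).
have := HJ (maxn N J) (leq_maxr N J).
rewrite /R_dist => H1 H2.
have := Rabs_def2 _ _ H2. lra.
Qed.

Lemma big_div I (s : seq I) (P : pred I) (F : I -> R) a b :
  \big[Rplus/0]_(i <- s | P i) (F i / a / b) = (\big[Rplus/0]_(i <- s | P i) F i) / a / b.
Proof.
apply: (big_rec2 (fun x y => x = y / a / b)); first by unfold Rdiv; ring.
move=> i y1 y2 _ ->; unfold Rdiv; ring.
Qed.

Lemma ln_prod I (s : seq I) (P : pred I) (F : I -> nat) :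
  (forall i, (0 < F i)%N) ->
  ln (INR (\prod_(i <- s | P i) F i)) = \big[Rplus/0]_(i <- s | P i) ln (INR (F i)).
Proof.
move=> HF.
suff [] : (0 < \prod_(i <- s | P i) F i)%N /\
  ln (INR (\prod_(i <- s | P i) F i)) = \big[Rplus/0]_(i <- s | P i) ln (INR (F i)) by [].
apply: (big_rec2 (fun (x : nat) y => (0 < x)%N /\ ln (INR x) = y)).
- by split => //; rewrite /= ln_1.
- move=> i y1 y2 _ [H1 H2]; split; first by rewrite muln_gt0 HF.
  rewrite mult_INR ln_mult ?H2 //; apply: INR_pos => //.
Qed.

Theorem corollary14 (d k r : nat) (Hd : (2 <= d)%N) (Hdk : (2 * d <= k + 1)%N)
  (Hr : (2 <= r)%N) (G : 'I_r -> rel 'I_k) (alpha : R) (Rt : 'I_r -> R) :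
  (* user 1 (index 0) has confusion graph G_1 *)
  (forall i : 'I_r, val i = 0%N -> forall a b, G i a b = G1 k d a b) ->
  (* users 2..r: (simple, undirected) confusion graphs containing the complement of G_1 *)
  (forall i : 'I_r, val i <> 0%N ->
     (forall a b, G i a b = G i b a) /\ (forall a, ~~ G i a a) /\
     (forall a b, G1c k d a b -> G i a b)) ->
  (0 <= alpha <= 1) ->
  (forall i : 'I_r, val i = 0%N -> Rt i = (alpha * log2 (INR d))) ->
  feasible_rate k r G Rt ->
  (\big[Rplus/0]_(i : 'I_r | val i != 0%N) Rt i <= (1 - alpha) * log2 (INR (k - d + 1))).
Proof.
move=> HG0 HGi Ha HRt0 [N [Mm [HN [Hfeas Hcv]]]].
have r0 : (0 < r)%N by apply: leq_trans Hr.
pose i0 : 'I_r := Ordinal r0.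
have Hi0 : val i0 = 0%N by [].
have Hq : (d <= k - d + 1)%N by lia.
have HGi' : forall i : 'I_r, val i <> 0%N -> forall a b, G1c k d a b -> G i a b.
  by move=> i Hi; case: (HGi i Hi) => _ [_ H].
have l2 : 0 < ln 2 by rewrite -ln_1; apply ln_increasing; lra.
have ld := ln_pos_nat d Hd.
have lq : 0 < ln (INR (k - d + 1)) by apply: ln_pos_nat; lia.
set S := \big[Rplus/0]_(i : 'I_r | val i != 0%N) Rt i.
pose u j := log2 (INR (Mm j i0)) / INR (N j) / log2 (INR d) +
  (\big[Rplus/0]_(i <- index_enum 'I_r | val i != 0%N) (log2 (INR (Mm j i)) / INR (N j))) /
  log2 (INR (k - d + 1)).
have Hu : Un_cv u (Rt i0 / log2 (INR d) + S / log2 (INR (k - d + 1))).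
  apply: CV_plus; apply: cv_scale; first exact: Hcv.
  exact: (cv_big _ (index_enum 'I_r) (fun i : 'I_r => val i != 0%N)
            (fun i j => log2 (INR (Mm j i)) / INR (N j)) Rt Hcv).
have [J HJ] := HN 1%N.
have Hle : forall j, (J <= j)%N -> u j <= 1.
  move=> j Hj.
  have Hn : 0 < INR (N j) by apply: INR_pos; exact: HJ.
  have Hp := (Hfeas j).1.
  have H := per_n d k r (N j) G (Mm j) i0 Hd Hq Hi0 HG0 HGi' (Hfeas j).
  rewrite (ln_prod _ _ _ _ Hp) in H.
  rewrite /u /log2 big_div.
  set A0 := ln (INR (Mm j i0)) in H *.
  set Sl := \big[Rplus/0]_(i <- index_enum 'I_r | val i != 0%N) ln (INR (Mm j i)) in H *.
  rewrite /cc in H.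
  have E1 : Sl / (ln (INR (k - d + 1)) / ln (INR d)) = Sl * ln (INR d) / ln (INR (k - d + 1))
    by field; lra.
  rewrite E1 in H.
  have E2 : A0 / ln 2 / INR (N j) / (ln (INR d) / ln 2) +
    Sl / ln 2 / INR (N j) / (ln (INR (k - d + 1)) / ln 2) =
    (A0 + Sl * ln (INR d) / ln (INR (k - d + 1))) / (INR (N j) * ln (INR d))
    by field; repeat split; lra.
  rewrite E2.
  have Hpos : 0 < INR (N j) * ln (INR d) by apply Rmult_lt_0_compat.
  apply (Rmult_le_reg_r _ _ _ Hpos).
  unfold Rdiv; rewrite Rmult_assoc Rinv_l; lra.
have HL := cv_le1 _ _ _ Hu Hle.
rewrite (HRt0 i0 Hi0) in HL.
have E3 : alpha * log2 (INR d) / log2 (INR d) = alpha.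
  rewrite /log2; field; lra.
rewrite E3 in HL.
have Hlq : 0 < log2 (INR (k - d + 1)) by rewrite /log2; apply Rdiv_lt_0_compat.
have : S / log2 (INR (k - d + 1)) <= 1 - alpha by lra.
move=> H; apply (Rmult_le_compat_r (log2 (INR (k - d + 1)))) in H; [|lra].
move: H; unfold Rdiv; rewrite Rmult_assoc Rinv_l; lra.
Qed.
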